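(* Let $V$ be a braided vector space of diagonal type over a field $F$ of characteristic zero with basis $x_1,\dots,x_n$ and braiding $C(x_i\otimes x_j)=p_{i,j}x_j\otimes x_i$, and let $\mathfrak B(V)$ be its Nichols algebra. Then $\mathfrak L(V)=\mathfrak L(V)_R$ if and only if $p_{i,i}^2=1$ for all $i$ and, for all $1\le i\ne j\le n$, $p_{i,j}p_{j,i}=1$ and $p_{i,j}^3=1$. In this case $\mathfrak L(V)=\mathfrak L(V)_R=V$.
   Context: $\mathfrak B(V)=T(V)/\bigoplus_{m\ge2}\ker S_m$ is $\mathbb Z^n$-graded with $\deg x_i=e_i$; for homogeneous $u,v$ with $\deg u=\sum a_ie_i$, $\deg v=\sum b_je_j$ put $p_{u,v}=\prod p_{i,j}^{a_ib_j}$. $\mathfrak L(V)$ is the subspace of $\mathfrak B(V)$ generated by $V$ under the braided bracket $[u,v]=uv-p_{u,v}vu$ (for homogeneous $u,v$, extended bilinearly), i.e. the smallest subspace containing $V$ and closed under this bracket (the Nichols braided Lie algebra). $\mathfrak L(V)_R$ is the Lie subalgebra of $\mathfrak B(V)$ generated by $V$ under $[u,v]_R=p_{u,v}uv-p_{v,u}vu$. *)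

(* Defs.v *)
From HB Require Import structures.
From mathcomp Require Import all_boot all_order all_algebra all_fingroup.
Set Implicit Arguments. Unset Strict Implicit. Unset Printing Implicit Defensive.
Import Order.TTheory GRing.Theory.
Local Open Scope ring_scope.

Section Nichols.
Variables (F : fieldType) (n : nat) (p : 'I_n -> 'I_n -> F).

(* Words x_{w_1}...x_{w_m} form the basis of T(V); an element of T(V) is
   given by its coefficient function on words, with finite support. *)
Definition word := seq 'I_n.
Definition tens := word -> F.

(* finite support (there are finitely many words of each length) *)
Definition tfin (u : tens) := exists N : nat, forall w : word, (N < size w)%N -> u w = 0.

Definition tadd (u v : tens) : tens := fun w => u w + v w.
Definition topp (u : tens) : tens := fun w => - u w.
Definition tscale (a : F) (u : tens) : tens := fun w => a * u w.

Definition xgen (i : 'I_n) : tens := fun w => (w == [:: i])%:R.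

Definition pdeg (a b : word) : F :=
  \prod_(i < n) \prod_(j < n) p i j ^+ (count_mem i a * count_mem j b).

(* braided bracket [u,v] = uv - p_{u,v} vu on words, extended bilinearly *)
Definition brL (u v : tens) : tens := fun w =>
  \sum_(k < (size w).+1)
     (u (take k w) * v (drop k w)
      - pdeg (drop k w) (take k w) * (v (take k w) * u (drop k w))).

(* [u,v]_R = p_{u,v} uv - p_{v,u} vu on words, extended bilinearly *)
Definition brR (u v : tens) : tens := fun w =>
  \sum_(k < (size w).+1)
     (pdeg (take k w) (drop k w) * (u (take k w) * v (drop k w))
      - pdeg (take k w) (drop k w) * (v (take k w) * u (drop k w))).

(* Quantum symmetrizer S_m = sum_{s in S_m} T_s, where the braid lift T_s maps
   the word a = a_1..a_m to (prod_{i<j, s i > s j} p_{a_i,a_j}) times the word b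
   with b_{s i} = a_i.  symm u b is the coefficient of the word b in S_m(u_m),
   u_m the degree-m component of u, m = size b. *)
Definition symm (u : tens) (b : word) : F :=
  let t := in_tuple b in
  \sum_(s : 'S_(size b))
    (\prod_(i : 'I_(size b)) \prod_(j : 'I_(size b) | (i < j)%N && (s j < s i)%N)
        p (tnth t (s i)) (tnth t (s j)))
    * u [seq tnth t (s i) | i <- enum 'I_(size b)].

(* the ideal  (+)_{m>=2} ker S_m  of T(V) *)
Definition nideal (u : tens) : Prop :=
  tfin u /\ u [::] = 0 /\ (forall w : word, size w = 1%N -> u w = 0)
  /\ (forall b : word, (2 <= size b)%N -> symm u b = 0).

(* u lies in V + ideal, i.e. its class in B(V) lies in (the image of) V *)
Definition inVmod (u : tens) : Prop :=
  exists v : tens, (forall w : word, size w != 1%N -> v w = 0)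
                   /\ nideal (tadd u (topp v)).

(* Preimage in T(V) of L(V): smallest subspace of B(V) containing V and
   closed under the braided bracket (saturated under the ideal). *)
Inductive LT : tens -> Prop :=
| LT_gen i : LT (xgen i)
| LT_zero : LT (fun _ => 0)
| LT_add u v : LT u -> LT v -> LT (tadd u v)
| LT_scale a u : LT u -> LT (tscale a u)
| LT_br u v : LT u -> LT v -> LT (brL u v)
| LT_ideal u v : LT u -> nideal v -> LT (tadd u v).

(* Preimage in T(V) of L(V)_R *)
Inductive LRT : tens -> Prop :=
| LRT_gen i : LRT (xgen i)
| LRT_zero : LRT (fun _ => 0)
| LRT_add u v : LRT u -> LRT v -> LRT (tadd u v)
| LRT_scale a u : LRT u -> LRT (tscale a u)
| LRT_br u v : LRT u -> LRT v -> LRT (brR u v)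
| LRT_ideal u v : LRT u -> nideal v -> LRT (tadd u v).

End Nichols.

(* Submission.v *)
Require Import Defs.
From HB Require Import structures.
From mathcomp Require Import all_boot all_order all_algebra all_fingroup.
From mathcomp Require Import ring zify.
From Stdlib Require Import FunctionalExtensionality.
Set Implicit Arguments. Unset Strict Implicit. Unset Printing Implicit Defensive.
Import GRing.Theory.
Local Open Scope ring_scope.

Section Core.
Variables (F : fieldType) (n : nat) (p : 'I_n -> 'I_n -> F).

Definition chi m (t : m.-tuple 'I_n) (s : 'S_m) : F :=
  \prod_(i : 'I_m) \prod_(j : 'I_m | (i < j)%N && (s j < s i)%N)
     p (tnth t (s i)) (tnth t (s j)).
Definition pw m (t : m.-tuple 'I_n) (s : 'S_m) : word n :=
  [seq tnth t (s i) | i <- enum 'I_m].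
Definition sym m (t : m.-tuple 'I_n) (u : tens F n) : F :=
  \sum_(s : 'S_m) chi t s * u (pw t s).

Lemma symmE u b : symm p u b = sym (in_tuple b) u. Proof. by []. Qed.

Definition del m (t : m.+1.-tuple 'I_n) (r : 'I_m.+1) : m.-tuple 'I_n :=
  [tuple tnth t (lift r j) | j < m].

Lemma sum_lift_perm m (i0 j0 : 'I_m.+1) (G : 'S_m.+1 -> F) :
  \sum_(s : 'S_m.+1 | s i0 == j0) G s = \sum_(s : 'S_m) G (lift_perm i0 j0 s).
Proof.
rewrite (reindex (lift_perm i0 j0)); last first.
  pose ulsf i (s : 'S_m.+1) k := odflt k (unlift (s i) (s (lift i k))).
  have ulsfK i (s : 'S_m.+1) k: lift (s i) (ulsf i s k) = s (lift i k).
    rewrite /ulsf; have:= neq_lift i k.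
    by rewrite -(can_eq (permK s)) => /unlift_some[] ? ? ->.
  have inj_ulsf: injective (ulsf i0 _).
    move=> s; apply: can_inj (ulsf (s i0) s^-1%g) _ => k'.
    by rewrite {1}/ulsf ulsfK !permK liftK.
  exists (fun s => perm (inj_ulsf s)) => [s _ | s].
    by apply/permP=> k'; rewrite permE /ulsf lift_perm_lift lift_perm_id liftK.
  move/(s _ =P _) => si0; apply/permP=> k.
  case: (unliftP i0 k) => [k'|] ->; rewrite ?lift_perm_id //.
  by rewrite lift_perm_lift -si0 permE ulsfK.
by apply: eq_bigl => s; rewrite lift_perm_id eqxx.
Qed.

Lemma sum_perm_split m (i : 'I_m.+1) (G : 'S_m.+1 -> F) :
  \sum_s G s = \sum_(r : 'I_m.+1) \sum_(s : 'S_m) G (lift_perm i r s).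
Proof.
rewrite (partition_big (fun s : 'S_m.+1 => s i) xpredT) //=.
by apply: eq_bigr => r _; rewrite -sum_lift_perm.
Qed.

Lemma ltn_lift m (r : 'I_m.+1) (a b : 'I_m) : (lift r a < lift r b)%N = (a < b)%N.
Proof. by rewrite /= !ltnNge leq_bump2. Qed.

Lemma pw_lift0 m (t : m.+1.-tuple 'I_n) r s :
  pw t (lift_perm ord0 r s) = tnth t r :: pw (del t r) s.
Proof.
rewrite /pw enum_ordSl /= lift_perm_id -map_comp; congr (_ :: _).
by apply: eq_map => k /=; rewrite lift_perm_lift tnth_mktuple.
Qed.

Lemma chi_lift0 m (t : m.+1.-tuple 'I_n) r s :
  chi t (lift_perm ord0 r s) =
  (\prod_(x : 'I_m.+1 | (x < r)%N) p (tnth t r) (tnth t x)) * chi (del t r) s.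
Proof.
rewrite /chi big_ord_recl lift_perm_id; congr (_ * _).
  rewrite [RHS](reindex_inj (@perm_inj _ (lift_perm ord0 r s))) /=.
  apply: eq_bigl => j; case: (unliftP ord0 j) => [j'|] ->.
    by rewrite lift_perm_lift.
  by rewrite lift_perm_id ltnn.
apply: eq_bigr => i _; rewrite big_mkcond big_ord_recl /= mul1r [RHS]big_mkcond /=.
symmetry; apply: eq_bigr => j _; rewrite !lift_perm_lift ltn_lift !tnth_mktuple.
by rewrite (_ : (bump 0 i < bump 0 j)%N = (i < j)%N).
Qed.

Lemma sym_left m (t : m.+1.-tuple 'I_n) u :
  sym t u = \sum_(r : 'I_m.+1)
     (\prod_(x : 'I_m.+1 | (x < r)%N) p (tnth t r) (tnth t x)) *
     sym (del t r) (fun w => u (tnth t r :: w)).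
Proof.
rewrite /sym (sum_perm_split ord0); apply: eq_bigr => r _; rewrite mulr_sumr.
by apply: eq_bigr => s _; rewrite chi_lift0 pw_lift0 mulrA.
Qed.


Lemma widen_lift m (k : 'I_m) : widen_ord (leqnSn m) k = lift ord_max k.
Proof. by apply: val_inj; rewrite /= /bump leqNgt ltn_ord. Qed.

Lemma pw_liftmax m (t : m.+1.-tuple 'I_n) r s :
  pw t (lift_perm ord_max r s) = rcons (pw (del t r) s) (tnth t r).
Proof.
rewrite /pw enum_ordSr map_rcons lift_perm_id -map_comp; congr (rcons _ _).
by apply: eq_map => k /=; rewrite widen_lift lift_perm_lift tnth_mktuple.
Qed.

Lemma chi_liftmax m (t : m.+1.-tuple 'I_n) r s :
  chi t (lift_perm ord_max r s) =
  (\prod_(x : 'I_m.+1 | (r < x)%N) p (tnth t x) (tnth t r)) * chi (del t r) s.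
Proof.
rewrite /chi big_ord_recr /= [X in _ * X]big_pred0; last first.
  by move=> j; rewrite ltnNge -ltnS ltn_ord.
rewrite mulr1.
rewrite [X in X * _](reindex_inj (@perm_inj _ (lift_perm ord_max r s))) /=.
rewrite [X in X * _]big_mkcond big_ord_recr /= lift_perm_id ltnn mulr1.
rewrite -big_split /=.
apply: eq_bigr => i _; rewrite widen_lift lift_perm_lift.
rewrite big_mkcond big_ord_recr /= lift_perm_id.
rewrite ltn_ord /= mulrC; congr (_ * _); rewrite [RHS]big_mkcond /=.
symmetry; apply: eq_bigr => j _; rewrite widen_lift !lift_perm_lift !tnth_mktuple.
by rewrite (ltn_lift r (s j) (s i)).
Qed.

Lemma sym_right m (t : m.+1.-tuple 'I_n) u :
  sym t u = \sum_(r : 'I_m.+1)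
     (\prod_(x : 'I_m.+1 | (r < x)%N) p (tnth t x) (tnth t r)) *
     sym (del t r) (fun w => u (rcons w (tnth t r))).
Proof.
rewrite /sym (sum_perm_split ord_max); apply: eq_bigr => r _; rewrite mulr_sumr.
by apply: eq_bigr => s _; rewrite chi_liftmax pw_liftmax mulrA.
Qed.

Lemma size_pw m (t : m.-tuple 'I_n) s : size (pw t s) = m.
Proof. by rewrite size_map size_enum_ord. Qed.

Lemma sym0 (t : 0.-tuple 'I_n) u : sym t u = u [::].
Proof.
rewrite /sym (big_pred1 (1%g : 'S_0)); last by move=> s; symmetry; apply/eqP/permP => -[].
have /size0nil -> := size_pw t 1%g.
by rewrite /chi big_ord0 mul1r.
Qed.

Lemma sym1 (t : 1.-tuple 'I_n) u : sym t u = u [:: tnth t ord0].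
Proof.
rewrite sym_left big_ord1 big_pred0 // mul1r sym0.
by [].
Qed.

Lemma sym_tuple m (t : m.-tuple 'I_n) u : sym t u = symm p u t.
Proof.
case: t => s Hs; have Em := eqP Hs; subst m.
by rewrite (_ : Tuple Hs = in_tuple s) //; apply: val_inj.
Qed.

Lemma symm2 u x y : symm p u [:: x; y] = u [:: x; y] + p y x * u [:: y; x].
Proof.
rewrite symmE sym_left !big_ord_recl big_ord0 addr0 !sym1.
rewrite big_pred0 // mul1r.
rewrite (big_pred1 ord0) //; last by case=> -[|[|]].
by rewrite /del !tnth_mktuple /tnth /=.
Qed.

Lemma sym_vanish m (t : m.-tuple 'I_n) u :
  (forall w, size w = m -> u w = 0) -> sym t u = 0.
Proof. by move=> H; apply: big1 => s _; rewrite H ?size_pw ?mulr0. Qed.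

End Core.

Section Ideal.
Variables (F : fieldType) (n : nat) (p : 'I_n -> 'I_n -> F).
Local Notation tens := (tens F n).
Local Notation word := (word n).
Local Notation nideal := (nideal p).
Local Notation symm := (symm p).
Local Notation sym := (sym p).
Implicit Types (u v : tens) (g : word -> F).

Definition pinv (g : word -> F) := forall w w', perm_eq w w' -> g w = g w'.

Lemma perm_pw m (t : m.-tuple 'I_n) s : perm_eq (pw t s) t.
Proof.
apply: (@perm_trans _ (map (tnth t) (enum 'I_m))); last by rewrite map_tnth_enum.
rewrite /pw (map_comp (tnth t) s) perm_map //.
apply: uniq_perm; last 1 first.
- idtac.
move=> x; rewrite mem_enum; apply/mapP; exists (s^-1%g x); rewrite ?mem_enum //.
by rewrite permKV.
- rewrite map_inj_uniq ?enum_uniq //; exact: perm_inj.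
- exact: enum_uniq.
Qed.

Lemma sym_add m (t : m.-tuple 'I_n) u v : sym t (tadd u v) = sym t u + sym t v.
Proof. by rewrite /Submission.sym -big_split; apply: eq_bigr => s _; rewrite /tadd mulrDr. Qed.

Lemma sym_g m (t : m.-tuple 'I_n) g u : pinv g ->
  sym t (fun w => g w * u w) = g t * sym t u.
Proof.
move=> Hg; rewrite /Submission.sym mulr_sumr; apply: eq_bigr => s _.
by rewrite (Hg _ t) ?perm_pw // mulrCA.
Qed.

Lemma sym_sum m (t : m.-tuple 'I_n) (G : 'I_n -> tens) :
  sym t (fun w => \sum_(a < n) G a w) = \sum_(a < n) sym t (G a).
Proof.
rewrite /Submission.sym exchange_big /=; apply: eq_bigr => s _; by rewrite mulr_sumr.
Qed.

Lemma nideal_sym u : nideal u <-> tfin u /\ forall b, symm u b = 0.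
Proof.
split.
  case=> [Hf [H0 [H1 H2]]]; split=> // b.
  case: b => [|a [|c b]]; first by rewrite symmE sym0.
    by rewrite symmE sym1; apply: H1.
  by apply: H2.
case=> Hf H; split=> //; split; first by rewrite -(H [::]) symmE sym0.
split; last by move=> b _; apply: H.
by case=> [|a [|]] //= _; rewrite -(H [:: a]) symmE sym1.
Qed.

Lemma tfin_add u v : tfin u -> tfin v -> tfin (tadd u v).
Proof.
case=> N HN [M HM]; exists (maxn N M) => w Hw.
rewrite /tadd HN ?HM ?addr0 //.
  by apply: leq_ltn_trans Hw; rewrite leq_maxr.
by apply: leq_ltn_trans Hw; rewrite leq_maxl.
Qed.

Lemma tfin_g g u : tfin u -> tfin (fun w => g w * u w).
Proof. by case=> N HN; exists N => w Hw; rewrite HN ?mulr0. Qed.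

Lemma nideal_add u v : nideal u -> nideal v -> nideal (tadd u v).
Proof.
move=> /nideal_sym [Hu Su] /nideal_sym [Hv Sv]; apply/nideal_sym; split.
  exact: tfin_add.
by move=> b; rewrite symmE sym_add -!symmE Su Sv addr0.
Qed.

Lemma nideal_g g u : pinv g -> nideal u -> nideal (fun w => g w * u w).
Proof.
move=> Hg /nideal_sym [Hu Su]; apply/nideal_sym; split; first exact: tfin_g.
by move=> b; rewrite symmE sym_g // -symmE Su mulr0.
Qed.

Lemma nideal_zero : nideal (fun _ => 0).
Proof.
apply/nideal_sym; split; first by exists 0.
by move=> b; rewrite symmE; apply: sym_vanish.
Qed.

Lemma nideal_opp u : nideal u -> nideal (topp u).
Proof.
move=> Hu; have := @nideal_g (fun _ => -1) u (fun _ _ _ => erefl) Hu.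
by congr nideal; apply: functional_extensionality => w; rewrite mulN1r.
Qed.

Lemma nideal_scale a u : nideal u -> nideal (tscale a u).
Proof. by apply: (@nideal_g (fun _ => a)). Qed.

Lemma tfin_fam (H : 'I_n -> tens) : (forall a, tfin (H a)) ->
  exists N, forall a w, (N < size w)%N -> H a w = 0.
Proof.
move=> Hf.
suff [N HN] : exists N, forall a, a \in enum 'I_n -> forall w, (N < size w)%N -> H a w = 0.
  by exists N => a; apply: HN; rewrite mem_enum.
elim: (enum 'I_n) => [|a s [N HN]]; first by exists 0.
case: (Hf a) => M HM; exists (maxn N M) => b; rewrite inE => /orP [/eqP -> | Hb] w Hw.
  by apply: HM; apply: leq_ltn_trans Hw; rewrite leq_maxr.
by apply: HN => //; apply: leq_ltn_trans Hw; rewrite leq_maxl.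
Qed.

Definition LE (H : 'I_n -> tens) : tens :=
  fun w => if w is a :: w' then H a w' else 0.
Definition RE (H : 'I_n -> tens) : tens :=
  fun w => if rev w is a :: r then H a (rev r) else 0.

Lemma RE_rcons H w a : RE H (rcons w a) = H a w.
Proof. by rewrite /RE rev_rcons revK. Qed.
Lemma RE_nil H : RE H [::] = 0. Proof. by []. Qed.

Lemma nideal_LE H : (forall a, nideal (H a)) -> nideal (LE H).
Proof.
move=> HH; apply/nideal_sym; split.
  have [N HN] := tfin_fam (fun a => proj1 (HH a)).
  by exists N.+1 => -[|a w] //= Hw; apply: HN.
case=> [|x b]; first by rewrite symmE sym0.
rewrite symmE sym_left; apply: big1 => r _.
rewrite (_ : (fun w => LE H (tnth (in_tuple (x :: b)) r :: w)) = H (tnth (in_tuple (x :: b)) r)) //.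
by rewrite sym_tuple; have /nideal_sym [_ ->] := HH (tnth (in_tuple (x :: b)) r); rewrite mulr0.
Qed.

Lemma nideal_RE H : (forall a, nideal (H a)) -> nideal (RE H).
Proof.
move=> HH; apply/nideal_sym; split.
  have [N HN] := tfin_fam (fun a => proj1 (HH a)).
  exists N.+1 => w; case/lastP: w => [|w a] //; rewrite RE_rcons size_rcons => Hw.
  exact: HN.
case/lastP=> [|b x]; first by rewrite symmE sym0.
have Hs : size (rcons b x) = (size b).+1 by rewrite size_rcons.
rewrite -(sym_tuple p (Tuple (introT eqP Hs))) sym_right; apply: big1 => r _.
set a := tnth _ r.
rewrite (_ : (fun w => RE H (rcons w a)) = H a); last first.
  by apply: functional_extensionality => w; rewrite RE_rcons.
by rewrite sym_tuple; have /nideal_sym [_ ->] := HH a; rewrite mulr0.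
Qed.

End Ideal.

Section Prod.
Variables (F : fieldType) (n : nat) (p : 'I_n -> 'I_n -> F).
Local Notation tens := (tens F n).
Local Notation word := (word n).
Local Notation nideal := (nideal p).
Implicit Types (u v : tens) (f : word -> word -> F).

Definition tm f u v : tens := fun w =>
  \sum_(k < (size w).+1) f (take k w) (drop k w) * (u (take k w) * v (drop k w)).
Definition cinv f := forall x x' y y', perm_eq x x' -> perm_eq y y' -> f x y = f x' y'.

Lemma tm_zero_l f v : tm f (fun _ => 0) v = (fun _ => 0).
Proof. by apply: functional_extensionality => w; apply: big1 => k _; rewrite !mul0r mulr0. Qed.
Lemma tm_zero_r f u : tm f u (fun _ => 0) = (fun _ => 0).
Proof. by apply: functional_extensionality => w; apply: big1 => k _; rewrite !mulr0. Qed.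

Lemma tm_left_ideal v : nideal v -> forall N u f,
  (forall w, (N <= size w)%N -> u w = 0) -> cinv f -> nideal (tm f u v).
Proof.
move=> Hv; elim=> [|N IH] u f Hu Hf.
  have -> : u = (fun _ => 0) by apply: functional_extensionality => w; apply: Hu.
  by rewrite tm_zero_l; apply: nideal_zero.
rewrite (_ : tm f u v = tadd (fun w => (f [::] w * u [::]) * v w)
    (LE (fun a => tm (fun x y => f (a :: x) y) (fun z => u (a :: z)) v))); last first.
  apply: functional_extensionality => -[|a w].
    by rewrite /tm /tadd /= big_ord1 /= addr0 mulrA.
  rewrite /tm /tadd /= big_ord_recl /= mulrA; congr (_ + _).
apply: nideal_add.
  by apply: nideal_g => // w w' Hw; apply: (congr1 (fun x => x * _)); apply: Hf.
apply: nideal_LE => a; apply: IH.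
  by move=> w Hw; apply: Hu.
by move=> x x' y y' Hx Hy /=; apply: Hf => //; rewrite perm_cons.
Qed.

Lemma perm_rcons2 (x x' : word) a : perm_eq x x' -> perm_eq (rcons x a) (rcons x' a).
Proof. move=> H; rewrite perm_sym perm_rcons perm_sym perm_rcons; by rewrite perm_cons. Qed.

Lemma tm_right_ideal u : nideal u -> forall N v f,
  (forall w, (N <= size w)%N -> v w = 0) -> cinv f -> nideal (tm f u v).
Proof.
move=> Hu; elim=> [|N IH] v f Hv Hf.
  have -> : v = (fun _ => 0) by apply: functional_extensionality => w; apply: Hv.
  by rewrite tm_zero_r; apply: nideal_zero.
rewrite (_ : tm f u v = tadd (fun w => (f w [::] * v [::]) * u w)
    (RE (fun a => tm (fun x y => f x (rcons y a)) u (fun z => v (rcons z a))))); last first.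
  apply: functional_extensionality => w; case/lastP: w => [|w a].
    by rewrite /tm /tadd /= big_ord1 /= RE_nil addr0 mulrA mulrAC.
  rewrite /tm /tadd RE_rcons size_rcons big_ord_recr /= addrC.
  rewrite take_oversize ?drop_oversize ?size_rcons //.
  rewrite mulrA mulrAC; congr (_ + _).
  apply: eq_bigr => i _ /=.
  have Hi : (i <= size w)%N by rewrite -ltnS ltn_ord.
  by rewrite drop_rcons // -cats1 takel_cat.
apply: nideal_add.
  by apply: nideal_g => // w w' Hw; apply: (congr1 (fun x => x * _)); apply: Hf.
apply: nideal_RE => a; apply: IH.
  by move=> w Hw; apply: Hv; rewrite size_rcons.
by move=> x x' y y' Hx Hy; apply: Hf; rewrite ?perm_rcons2.
Qed.

End Prod.

Section Brackets.
Variables (F : fieldType) (n : nat) (p : 'I_n -> 'I_n -> F).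
Local Notation tens := (tens F n).
Local Notation word := (word n).
Local Notation nideal := (nideal p).
Local Notation tm := (@tm F n).
Local Notation cinv := (@cinv F n).
Implicit Types (u v a b : tens) (f : word -> word -> F).

Lemma cinv_pdeg : cinv (pdeg p).
Proof.
move=> x x' y y' /seq.permP Hx /seq.permP Hy; rewrite /pdeg.
by apply: eq_bigr => i _; apply: eq_bigr => j _; rewrite Hx Hy.
Qed.
Lemma cinv_pdegT : cinv (fun x y => pdeg p y x).
Proof. by move=> x x' y y' Hx Hy; apply: cinv_pdeg. Qed.
Lemma cinv_1 : cinv (fun _ _ => 1).
Proof. by []. Qed.

Lemma pdeg1 x y : pdeg p [:: x] [:: y] = p x y.
Proof.
rewrite /pdeg (bigD1 x) //= [X in _ * X]big1 ?mulr1; last first.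
  by move=> i /negbTE Hi; apply: big1 => j _; rewrite /= eq_sym Hi mul0n expr0.
rewrite (bigD1 y) //= [X in _ * X]big1 ?mulr1; last first.
  by move=> j /negbTE Hj; rewrite /= eq_sym Hj muln0 expr0.
by rewrite !eqxx /= expr1.
Qed.

Lemma brL_tm u v : brL p u v =
  tadd (tm (fun _ _ => 1) u v) (topp (tm (fun x y => pdeg p y x) v u)).
Proof.
apply: functional_extensionality => w.
rewrite /brL /Submission.tm /tadd /topp -sumrN -big_split; apply: eq_bigr => k _ /=.
by rewrite mul1r.
Qed.

Lemma brR_tm u v : brR p u v =
  tadd (tm (pdeg p) u v) (topp (tm (pdeg p) v u)).
Proof.
apply: functional_extensionality => w.
rewrite /brR /Submission.tm /tadd /topp -sumrN -big_split; apply: eq_bigr => k _ /=.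
by [].
Qed.

Lemma tfinS u : tfin u -> exists N, forall w, (N <= size w)%N -> u w = 0.
Proof. by case=> N HN; exists N.+1. Qed.

Lemma tm_decomp f a I a' I' : cinv f -> tfin a -> tfin a' -> nideal I -> nideal I' ->
  nideal (tadd (tm f (tadd a I) (tadd a' I')) (topp (tm f a a'))).
Proof.
move=> Hf Ha Ha' HI HI'.
have -> : tadd (tm f (tadd a I) (tadd a' I')) (topp (tm f a a')) =
    tadd (tm f a I') (tm f I (tadd a' I')).
  apply: functional_extensionality => w.
  rewrite /tadd /topp /Submission.tm -sumrN -!big_split; apply: eq_bigr => k _ /=.
  rewrite /tadd; ring.
apply: nideal_add.
  by have [N HN] := tfinS Ha; apply: tm_left_ideal HN Hf.
have [N HN] := tfinS (tfin_add Ha' (proj1 HI')).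
exact: tm_right_ideal HN Hf.
Qed.

Lemma br_decomp f g a I a' I' : cinv f -> cinv g -> tfin a -> tfin a' -> nideal I -> nideal I' ->
  nideal (tadd
    (tadd (tm f (tadd a I) (tadd a' I')) (topp (tm g (tadd a' I') (tadd a I))))
    (topp (tadd (tm f a a') (topp (tm g a' a))))).
Proof.
move=> Hf Hg Ha Ha' HI HI'.
have -> : tadd
    (tadd (tm f (tadd a I) (tadd a' I')) (topp (tm g (tadd a' I') (tadd a I))))
    (topp (tadd (tm f a a') (topp (tm g a' a)))) =
  tadd (tadd (tm f (tadd a I) (tadd a' I')) (topp (tm f a a')))
       (topp (tadd (tm g (tadd a' I') (tadd a I)) (topp (tm g a' a)))).
  by apply: functional_extensionality => w; rewrite /tadd /topp; ring.
apply: nideal_add; first exact: tm_decomp.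
by apply: nideal_opp; apply: tm_decomp.
Qed.

End Brackets.

Section Main.
Variables (F : fieldType) (n : nat) (p : 'I_n -> 'I_n -> F).
Local Notation tens := (tens F n).
Local Notation word := (word n).
Local Notation nideal := (nideal p).
Local Notation tm := (@tm F n).
Implicit Types (u v a b : tens).

Definition cond := (forall i, p i i ^+ 2 = 1) /\
    (forall i j, i != j -> p i j * p j i = 1 /\ p i j ^+ 3 = 1).

Lemma cond_pp : cond -> forall x y, p x y * p y x = 1.
Proof.
case=> H1 H2 x y; case: (eqVneq x y) => [->|Hxy]; first by rewrite -expr2.
by case: (H2 _ _ Hxy).
Qed.

Lemma cond_sq : cond -> forall x y, x != y -> p x y = p y x ^+ 2.
Proof.
move=> Hc x y Hxy; have Hyx : y != x by rewrite eq_sym.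
have [h1 h3] := (proj2 Hc) y x Hyx.
by rewrite -[p y x ^+ 2]mulr1 -h1 mulrA -exprSr h3 mul1r.
Qed.

Definition V1 a := forall w : word, size w != 1%N -> a w = 0.

Lemma V1_tfin a : V1 a -> tfin a.
Proof. by move=> H; exists 1%N => w Hw; apply: H; rewrite neq_ltn Hw orbT. Qed.

Lemma V1_prod a b (w : word) (k : 'I_(size w).+1) : V1 a -> V1 b -> size w != 2%N ->
  a (take k w) * b (drop k w) = 0.
Proof.
move=> Ha Hb Hw; have Hk : (k <= size w)%N by rewrite -ltnS ltn_ord.
case: (eqVneq (size (take k w)) 1%N) => Ht; last by rewrite Ha ?mul0r.
rewrite size_takel // in Ht; rewrite Hb ?mulr0 // size_drop; lia.
Qed.

Lemma brL2 u v x y : u [::] = 0 -> v [::] = 0 ->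
  brL p u v [:: x; y] = u [:: x] * v [:: y] - p y x * (v [:: x] * u [:: y]).
Proof.
move=> Hu Hv; rewrite /brL /= !big_ord_recl big_ord0 /=.
rewrite Hu Hv pdeg1; ring.
Qed.

Lemma brR2 u v x y : u [::] = 0 -> v [::] = 0 ->
  brR p u v [:: x; y] = p x y * (u [:: x] * v [:: y]) - p x y * (v [:: x] * u [:: y]).
Proof.
move=> Hu Hv; rewrite /brR /= !big_ord_recl big_ord0 /=.
rewrite Hu Hv pdeg1; ring.
Qed.


Lemma V1_nil a : V1 a -> a [::] = 0.
Proof. by move=> H; apply: H. Qed.

Lemma br_vanish (br : tens -> tens -> tens) a b :
  (br = fun a b => brL p a b) \/ (br = fun a b => brR p a b) ->
  V1 a -> V1 b -> forall w : word, size w != 2%N -> br a b w = 0.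
Proof.
move=> Hbr Ha Hb w Hw; case: Hbr => ->; apply: big1 => k _.
  by rewrite (V1_prod k Ha Hb Hw) (V1_prod k Hb Ha Hw) mulr0 subrr.
by rewrite (V1_prod k Ha Hb Hw) (V1_prod k Hb Ha Hw) !mulr0 subrr.
Qed.

Lemma brL_V1_ideal a b : cond -> V1 a -> V1 b -> nideal (brL p a b).
Proof.
move=> Hc Ha Hb; apply/nideal_sym; split.
  by exists 2%N => w Hw; apply: (br_vanish (or_introl erefl)) => //; rewrite neq_ltn Hw orbT.
move=> w; case: (eqVneq (size w) 2%N) => Hw; last first.
  rewrite symmE; apply: sym_vanish => w' Hw'.
  by apply: (br_vanish (or_introl erefl)) => //; rewrite Hw'.
case: w Hw => [|x [|y [|]]] // _.
rewrite symm2 !brL2 ?V1_nil //.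
have h := cond_pp Hc y x.
transitivity (a [:: x] * b [:: y] * (1 - p y x * p x y)); first by ring.
by rewrite h subrr mulr0.
Qed.

Lemma brR_V1_ideal a b : cond -> V1 a -> V1 b -> nideal (brR p a b).
Proof.
move=> Hc Ha Hb; apply/nideal_sym; split.
  by exists 2%N => w Hw; apply: (br_vanish (or_intror erefl)) => //; rewrite neq_ltn Hw orbT.
move=> w; case: (eqVneq (size w) 2%N) => Hw; last first.
  rewrite symmE; apply: sym_vanish => w' Hw'.
  by apply: (br_vanish (or_intror erefl)) => //; rewrite Hw'.
case: w Hw => [|x [|y [|]]] // _.
rewrite symm2 !brR2 ?V1_nil //.
case: (eqVneq x y) => [<-|Hxy]; first by ring.
have h := cond_sq Hc Hxy.
transitivity ((a [:: x] * b [:: y] - b [:: x] * a [:: y]) * (p x y - p y x ^+ 2)); first by ring.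
by rewrite h subrr mulr0.
Qed.

Lemma V1_add a b : V1 a -> V1 b -> V1 (tadd a b).
Proof. by move=> Ha Hb w Hw; rewrite /tadd Ha ?Hb ?addr0. Qed.
Lemma V1_scale c a : V1 a -> V1 (tscale c a).
Proof. by move=> Ha w Hw; rewrite /tscale Ha ?mulr0. Qed.
Lemma V1_zero : V1 (fun _ => 0). Proof. by []. Qed.
Lemma V1_xgen (i : 'I_n) : V1 (@xgen F n i).
Proof. by move=> w Hw; rewrite /xgen; case: eqP => // E; rewrite E in Hw. Qed.

Lemma nideal_ext u v : u = v -> nideal u -> nideal v. Proof. by move=> ->. Qed.

Lemma decomp_ideal u a : tadd u (topp a) = tadd u (topp a). Proof. by []. Qed.

Lemma br_inV (br : tens -> tens -> tens) f g u v a b :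
  cond -> cinv f -> cinv g ->
  (forall u v, br u v = tadd (tm f u v) (topp (tm g v u))) ->
  (forall a b, V1 a -> V1 b -> nideal (br a b)) ->
  V1 a -> V1 b -> nideal (tadd u (topp a)) -> nideal (tadd v (topp b)) ->
  nideal (br u v).
Proof.
move=> Hc Hf Hg Hbr HV Ha Hb Hu Hv.
set I := tadd u (topp a) in Hu; set J := tadd v (topp b) in Hv.
have Eu : u = tadd a I by apply: functional_extensionality => w; rewrite /I /tadd /topp; ring.
have Ev : v = tadd b J by apply: functional_extensionality => w; rewrite /J /tadd /topp; ring.
clearbody I J; subst u v.
have := br_decomp Hf Hg (V1_tfin Ha) (V1_tfin Hb) Hu Hv.
rewrite -!Hbr => H.
have := nideal_add H (HV _ _ Ha Hb).
by apply: nideal_ext; apply: functional_extensionality => w; rewrite /tadd /topp; ring.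
Qed.

Lemma LT_inV : cond -> forall u, LT p u -> inVmod p u.
Proof.
move=> Hc u0 HL; elim: HL => [i||u v _ [a [Ha Hu]] _ [b [Hb Hv]]|c u _ [a [Ha Hu]]
   |u v _ [a [Ha Hu]] _ [b [Hb Hv]]|u v _ [a [Ha Hu]] Hv].
- exists (@xgen F n i); split; first exact: V1_xgen.
  by apply: (nideal_ext _ (nideal_zero p)); apply: functional_extensionality => w; rewrite /tadd /topp subrr.
- exists (fun _ => 0); split => //.
  by apply: (nideal_ext _ (nideal_zero p)); apply: functional_extensionality => w; rewrite /tadd /topp subrr.
- exists (tadd a b); split; first exact: V1_add.
  apply: (nideal_ext _ (nideal_add Hu Hv)); apply: functional_extensionality => w.
  by rewrite /tadd /topp; ring.
- exists (tscale c a); split; first exact: V1_scale.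
  apply: (nideal_ext _ (nideal_scale c Hu)); apply: functional_extensionality => w.
  by rewrite /tscale /tadd /topp; ring.
- exists (fun _ => 0); split => //.
  apply: (nideal_ext _ (br_inV Hc (@cinv_1 F n) (cinv_pdegT p) (brL_tm p) _ Ha Hb Hu Hv)).
    by apply: functional_extensionality => w; rewrite /tadd /topp oppr0 addr0.
  by move=> a' b'; apply: brL_V1_ideal.
- exists a; split => //.
  apply: (nideal_ext _ (nideal_add Hu Hv)); apply: functional_extensionality => w.
  by rewrite /tadd /topp; ring.
Qed.

Lemma LRT_inV : cond -> forall u, LRT p u -> inVmod p u.
Proof.
move=> Hc u0 HL; elim: HL => [i||u v _ [a [Ha Hu]] _ [b [Hb Hv]]|c u _ [a [Ha Hu]]
   |u v _ [a [Ha Hu]] _ [b [Hb Hv]]|u v _ [a [Ha Hu]] Hv].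
- exists (@xgen F n i); split; first exact: V1_xgen.
  by apply: (nideal_ext _ (nideal_zero p)); apply: functional_extensionality => w; rewrite /tadd /topp subrr.
- exists (fun _ => 0); split => //.
  by apply: (nideal_ext _ (nideal_zero p)); apply: functional_extensionality => w; rewrite /tadd /topp subrr.
- exists (tadd a b); split; first exact: V1_add.
  apply: (nideal_ext _ (nideal_add Hu Hv)); apply: functional_extensionality => w.
  by rewrite /tadd /topp; ring.
- exists (tscale c a); split; first exact: V1_scale.
  apply: (nideal_ext _ (nideal_scale c Hu)); apply: functional_extensionality => w.
  by rewrite /tscale /tadd /topp; ring.
- exists (fun _ => 0); split => //.
  apply: (nideal_ext _ (br_inV Hc (cinv_pdeg p) (cinv_pdeg p) (brR_tm p) _ Ha Hb Hu Hv)).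
    by apply: functional_extensionality => w; rewrite /tadd /topp oppr0 addr0.
  by move=> a' b'; apply: brR_V1_ideal.
- exists a; split => //.
  apply: (nideal_ext _ (nideal_add Hu Hv)); apply: functional_extensionality => w.
  by rewrite /tadd /topp; ring.
Qed.

Lemma V1_sum (P : tens -> Prop) a :
  P (fun _ => 0) -> (forall u v, P u -> P v -> P (tadd u v)) ->
  (forall c u, P u -> P (tscale c u)) -> (forall i : 'I_n, P (@xgen F n i)) -> V1 a -> P a.
Proof.
move=> P0 PA PS PG Ha.
have H : forall s : seq 'I_n, P (fun w => \sum_(i <- s) a [:: i] * @xgen F n i w).
  elim=> [|i s IH].
    by rewrite (_ : (fun w => _) = fun _ => 0) //; apply: functional_extensionality => w; rewrite big_nil.
  rewrite (_ : (fun w => _) = tadd (tscale (a [:: i]) (@xgen F n i)) (fun w => \sum_(i <- s) a [:: i] * @xgen F n i w)).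
    by apply: PA => //; apply: PS.
  by apply: functional_extensionality => w; rewrite big_cons.
rewrite (_ : a = fun w => \sum_(i < n) a [:: i] * @xgen F n i w) //.
apply: functional_extensionality => w.
case: (eqVneq (size w) 1%N) => Hw; last first.
  by rewrite Ha // big1 // => i _; rewrite (V1_xgen i Hw) mulr0.
case: w Hw => [|c [|]] // _.
rewrite (bigD1 c) //= /xgen eqxx mulr1 big1 ?addr0 // => i /negbTE Hi.
by rewrite eqseq_cons eq_sym Hi /= mulr0.
Qed.

Lemma inV_LT u : inVmod p u -> LT p u.
Proof.
case=> a [Ha Hu].
rewrite (_ : u = tadd a (tadd u (topp a))); last first.
  by apply: functional_extensionality => w; rewrite /tadd /topp; ring.
apply: LT_ideal => //; apply: V1_sum Ha.
- exact: LT_zero.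
- exact: LT_add.
- exact: LT_scale.
- exact: LT_gen.
Qed.

Lemma inV_LRT u : inVmod p u -> LRT p u.
Proof.
case=> a [Ha Hu].
rewrite (_ : u = tadd a (tadd u (topp a))); last first.
  by apply: functional_extensionality => w; rewrite /tadd /topp; ring.
apply: LRT_ideal => //; apply: V1_sum Ha.
- exact: LRT_zero.
- exact: LRT_add.
- exact: LRT_scale.
- exact: LRT_gen.
Qed.

End Main.

Section Conv.
Variables (F : fieldType) (n : nat) (p : 'I_n -> 'I_n -> F).
Local Notation tens := (tens F n).
Local Notation word := (word n).
Local Notation nideal := (nideal p).
Implicit Types (u v a b : tens).

Definition phi2 (al be : F) (i j : 'I_n) (u : tens) : F := al * u [:: i; j] + be * u [:: j; i].

Lemma xgen_nil (i : 'I_n) : @xgen F n i [::] = 0. Proof. by []. Qed.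
Lemma xgen1 (i j : 'I_n) : @xgen F n i [:: j] = (j == i)%:R.
Proof. by rewrite /xgen eqseq_cons andbT. Qed.
Lemma xgen2 (i j k : 'I_n) : @xgen F n i [:: j; k] = 0.
Proof. by rewrite /xgen eqseq_cons andbF. Qed.

Lemma br_nil (br : tens -> tens -> tens) u v :
  (br = fun a b => brL p a b) \/ (br = fun a b => brR p a b) ->
  u [::] = 0 -> v [::] = 0 -> br u v [::] = 0.
Proof.
by move=> Hbr Hu Hv; case: Hbr => ->; rewrite /brL /brR /= big_ord1 /= Hu Hv !mul0r !mulr0 subrr.
Qed.

Lemma LRT_inv al be i j :
  (forall v, nideal v -> phi2 al be i j v = 0) ->
  (forall u v, u [::] = 0 -> v [::] = 0 -> phi2 al be i j (brR p u v) = 0) ->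
  forall u, LRT p u -> u [::] = 0 /\ phi2 al be i j u = 0.
Proof.
move=> HI HB u HL; elim: HL => [k||u1 v1 _ [H1 H2] _ [H3 H4]|c u1 _ [H1 H2]
   |u1 v1 _ [H1 H2] _ [H3 H4]|u1 v1 _ [H1 H2] Hv].
- by rewrite /phi2 xgen_nil !xgen2 !mulr0 addr0.
- by rewrite /phi2 !mulr0 addr0.
- split; first by rewrite /tadd H1 H3 addr0.
  by move: H2 H4; rewrite /phi2 /tadd => H2 H4; rewrite -[0]addr0 -{1}H2 -H4; ring.
- split; first by rewrite /tscale H1 mulr0.
  by move: H2; rewrite /phi2 /tscale => H2; rewrite -(mulr0 c) -{1}H2; ring.
- by split; [apply: br_nil => //; right | apply: HB].
- have [_ [Hv0 _]] := Hv; have Hp := HI _ Hv.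
  split; first by rewrite /tadd H1 Hv0 addr0.
  by move: H2 Hp; rewrite /phi2 /tadd => H2 Hp; rewrite -[0]addr0 -{1}H2 -Hp; ring.
Qed.

Lemma LT_inv al be i j :
  (forall v, nideal v -> phi2 al be i j v = 0) ->
  (forall u v, u [::] = 0 -> v [::] = 0 -> phi2 al be i j (brL p u v) = 0) ->
  forall u, LT p u -> u [::] = 0 /\ phi2 al be i j u = 0.
Proof.
move=> HI HB u HL; elim: HL => [k||u1 v1 _ [H1 H2] _ [H3 H4]|c u1 _ [H1 H2]
   |u1 v1 _ [H1 H2] _ [H3 H4]|u1 v1 _ [H1 H2] Hv].
- by rewrite /phi2 xgen_nil !xgen2 !mulr0 addr0.
- by rewrite /phi2 !mulr0 addr0.
- split; first by rewrite /tadd H1 H3 addr0.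
  by move: H2 H4; rewrite /phi2 /tadd => H2 H4; rewrite -[0]addr0 -{1}H2 -H4; ring.
- split; first by rewrite /tscale H1 mulr0.
  by move: H2; rewrite /phi2 /tscale => H2; rewrite -(mulr0 c) -{1}H2; ring.
- by split; [apply: br_nil => //; left | apply: HB].
- have [_ [Hv0 _]] := Hv; have Hp := HI _ Hv.
  split; first by rewrite /tadd H1 Hv0 addr0.
  by move: H2 Hp; rewrite /phi2 /tadd => H2 Hp; rewrite -[0]addr0 -{1}H2 -Hp; ring.
Qed.

Lemma ideal_symm2 v x y : nideal v -> v [:: x; y] + p y x * v [:: y; x] = 0.
Proof. by move=> /nideal_sym [_ H]; rewrite -symm2. Qed.


Lemma nec : (forall u, LT p u <-> LRT p u) -> (forall i j, p i j != 0) -> cond p.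
Proof.
move=> HE Hp.
have Pa : forall i, p i i ^+ 2 = 1.
  move=> i; case: (eqVneq (p i i ^+ 2) 1) => // Hne; exfalso.
  have L : LT p (brL p (@xgen F n i) (@xgen F n i)) by apply: LT_br; apply: LT_gen.
  have HI : forall v, nideal v -> phi2 1 0 i i v = 0.
    move=> v Hv; have := ideal_symm2 i i Hv; rewrite /phi2 mul0r addr0 mul1r => H.
    have : (1 + p i i) * v [:: i; i] = 0 by rewrite mulrDl mul1r.
    move/eqP; rewrite mulf_eq0 => /orP [/eqP E|/eqP //].
    move/eqP: E; rewrite addrC addr_eq0 => /eqP E.
    by move: Hne; rewrite E sqrrN expr1n eqxx.
  have HB : forall u v, u [::] = 0 -> v [::] = 0 -> phi2 1 0 i i (brR p u v) = 0.
    by move=> u v Hu Hv; rewrite /phi2 brR2 //; ring.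
  have [_ Z] := LRT_inv HI HB ((HE _).1 L).
  move: Z; rewrite /phi2 brL2 ?xgen_nil // !xgen1 eqxx mul0r addr0 mul1r !mulr1.
  move/eqP; rewrite subr_eq0 => /eqP E.
  by move: Hne; rewrite -E expr1n eqxx.
have Pb : forall i j, i != j -> p i j * p j i = 1.
  move=> i j Hij; have Hji : (j == i) = false by rewrite eq_sym; apply/negbTE.
  have Hij' : (i == j) = false by apply/negbTE.
  case: (eqVneq (p i j * p j i) 1) => // Hne; exfalso.
  have HI : forall v, nideal v -> phi2 (p j i) (p i j) i j v = 0.
    move=> v Hv; have e1 := ideal_symm2 i j Hv; have e2 := ideal_symm2 j i Hv.
    have E1 : v [:: i; j] = 0.
      have : v [:: i; j] * (1 - p i j * p j i) = 0.
        transitivity (v [:: i; j] + p j i * v [:: j; i] - p j i * (v [:: j; i] + p i j * v [:: i; j])); first by ring.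
        by rewrite e1 e2 mulr0 subrr.
      move/eqP; rewrite mulf_eq0 => /orP [/eqP //|]; rewrite subr_eq0 => /eqP E.
      by move: Hne; rewrite -E eqxx.
    have E2 : v [:: j; i] = 0 by move: e2; rewrite E1 mulr0 addr0.
    by rewrite /phi2 E1 E2 !mulr0 addr0.
  have HB : forall u v, u [::] = 0 -> v [::] = 0 -> phi2 (p j i) (p i j) i j (brR p u v) = 0.
    by move=> u v Hu Hv; rewrite /phi2 !brR2 //; ring.
  have L1 : LT p (brL p (@xgen F n i) (@xgen F n j)) by apply: LT_br; apply: LT_gen.
  have L2 : LT p (brL p (@xgen F n j) (@xgen F n i)) by apply: LT_br; apply: LT_gen.
  have [_ Z1] := LRT_inv HI HB ((HE _).1 L1).
  have [_ Z2] := LRT_inv HI HB ((HE _).1 L2).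
  move: Z1 Z2; rewrite /phi2 !brL2 ?xgen_nil // !xgen1 !eqxx Hij' Hji /=.
  move=> Z1 Z2.
  have h1 : p j i = p i j ^+ 2.
    apply/eqP; rewrite -subr_eq0; apply/eqP; rewrite -Z1; ring.
  have h2 : p i j = p j i ^+ 2.
    apply/eqP; rewrite -subr_eq0; apply/eqP; rewrite -Z2; ring.
  have h3 : p i j ^+ 3 = 1.
    have : p i j * (p i j ^+ 3 - 1) = 0.
      rewrite mulrBr mulr1 -exprS (_ : p i j ^+ 4 = (p i j ^+ 2) ^+ 2); last by rewrite -exprM.
      by rewrite -h1 -h2 subrr.
    move/eqP; rewrite mulf_eq0 => /orP [E|]; first by move: (Hp i j); rewrite E.
    by rewrite subr_eq0 => /eqP.
  by move: Hne; rewrite h1 -exprS h3 eqxx.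
split => // i j Hij; split; first exact: Pb.
case: (eqVneq (p i j ^+ 3) 1) => // Hne; exfalso.
have Hji : (j == i) = false by rewrite eq_sym; apply/negbTE.
have Hij' : (i == j) = false by apply/negbTE.
have pp := Pb i j Hij.
have HI : forall v, nideal v -> phi2 1 (p j i) i j v = 0.
  by move=> v Hv; rewrite /phi2 mul1r; apply: ideal_symm2.
have HB : forall u v, u [::] = 0 -> v [::] = 0 -> phi2 1 (p j i) i j (brL p u v) = 0.
  move=> u v Hu Hv; rewrite /phi2 !brL2 //.
  transitivity (u [:: i] * v [:: j] * (1 - p i j * p j i)); first by ring.
  by rewrite pp subrr mulr0.
have L : LRT p (brR p (@xgen F n i) (@xgen F n j)) by apply: LRT_br; apply: LRT_gen.
have [_ Z] := LT_inv HI HB ((HE _).2 L).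
move: Z; rewrite /phi2 !brR2 ?xgen_nil // !xgen1 !eqxx Hij' Hji /= => Z.
have h : p i j = p j i ^+ 2.
  apply/eqP; rewrite -subr_eq0; apply/eqP; rewrite -Z; ring.
have E3 : p i j ^+ 3 = (p i j * p j i) ^+ 2 by rewrite exprMn -h; ring.
by move: Hne; rewrite E3 pp expr1n eqxx.
Qed.

End Conv.

Theorem proposition5p1 (F : fieldType) (Hchar : [pchar F] =i pred0)
  (n : nat) (p : 'I_n -> 'I_n -> F) (Hp : forall i j, p i j != 0) :
  ((forall u : tens F n, LT p u <-> LRT p u) <->
   ((forall i, p i i ^+ 2 = 1) /\
    (forall i j, i != j -> p i j * p j i = 1 /\ p i j ^+ 3 = 1)))
  /\
  ((forall u : tens F n, LT p u <-> LRT p u) ->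
   (forall u : tens F n, LT p u <-> inVmod p u) /\
   (forall u : tens F n, LRT p u <-> inVmod p u)).
Proof.
have Hs : cond p -> (forall u : tens F n, LT p u <-> inVmod p u) /\
                      (forall u : tens F n, LRT p u <-> inVmod p u).
  move=> Hc; split => u; split.
  - exact: LT_inV.
  - exact: inV_LT.
  - exact: LRT_inV.
  - exact: inV_LRT.
split.
  split; first by move=> HE; apply: nec.
  move=> Hc u; have [A B] := Hs Hc; split => H.
    by apply/(proj2 (B u))/(proj1 (A u)).
  by apply/(proj2 (A u))/(proj1 (B u)).
by move=> HE; apply: Hs; apply: nec.
Qed.
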